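(* Let $0<q<1$, let $m\in\{0,1,2,\dots\}$ and let $\lambda\in\left]0,\,q^m(1-q)^{-1}\right[$. Let $X\sim\mathscr{P}(\lambda;q,m)$ be the discrete random variable with $\Pr(X=j)=p_j(\lambda;q,m)$, $j=0,1,2,\dots$, as defined in the context. Then for every real $t$ with $|t|\le 1$, the probability generating function $\mathcal{G}_X(t):=\mathbb{E}(t^X)=\sum_{j\ge0}t^j p_j(\lambda;q,m)$ is given by \[ \mathcal{G}_{X}(t)=\frac{t^m\,(q^{-m}(1-q)\lambda;q)_\infty}{(q^{-m}t\lambda(1-q);q)_\infty}\;{}_3\phi_2\left(\begin{matrix}q^{-m},\,q/t,\,t\\ q^{1-m}(1-q)\lambda,\,q\end{matrix}\Big|\,q;\, q\lambda(1-q)\right), \] where the ${}_3\phi_2$ series terminates (it has at most $m+1$ nonzero terms).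
   Context: Throughout $0<q<1$. For $a\in\mathbb{C}$: $(a;q)_0=1$, $(a;q)_n=\prod_{k=0}^{n-1}(1-aq^k)$ for $n\ge1$, $(a;q)_\infty=\prod_{k\ge0}(1-aq^k)$, and $(a_1,\dots,a_l;q)_n=\prod_{i=1}^l(a_i;q)_n$. The $q$-number is $[a]_q=(1-q^a)/(1-q)$. The basic hypergeometric series is ${}_{s+1}\phi_s\left(\begin{matrix}a_1,\dots,a_{s+1}\\ b_1,\dots,b_s\end{matrix}\Big|q;\xi\right)=\sum_{k\ge0}\frac{(a_1,\dots,a_{s+1};q)_k}{(b_1,\dots,b_s;q)_k}\frac{\xi^k}{(q;q)_k}$. The Wall (little $q$-Laguerre) polynomial is $P_n(x;a|q)={}_2\phi_1\left(\begin{matrix}q^{-n},0\\ aq\end{matrix}\Big|q;qx\right)=\sum_{k=0}^n\frac{(q^{-n};q)_k}{(aq;q)_k}\frac{(qx)^k}{(q;q)_k}$. Write $m\wedge j=\min(m,j)$, $m\vee j=\max(m,j)$, $\binom{n}{2}=n(n-1)/2$. For $0<\lambda<q^m/(1-q)$ set $\mathcal{N}_{q,m}(\lambda)=\frac{(q^{1-m}(1-q)\lambda;q)_m}{q^m\,(q^{-m}(1-q)\lambda;q)_\infty}$ and \[ p_j(\lambda;q,m)=\frac{q^{2\binom{m\wedge j}{2}}(1-q)^{|m-j|}\lambda^{|m-j|}}{\mathcal{N}_{q,m}(\lambda)\,q^{mj}(q;q)_j(q;q)_m}\left(\frac{(q;q)_{m\vee j}}{(q;q)_{|m-j|}}P_{m\wedge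 j}\big((1-q)\lambda;q^{|m-j|}\,|\,q\big)\right)^2,\quad j=0,1,2,\dots \] These are the probabilities $|\langle\Psi^q_{z,m},\phi^q_j\rangle|^2$ ($\lambda=z\bar z$) of a generalized $q$-deformed coherent state in a $q$-number-state basis; the distribution is called the generalized Euler distribution $\mathscr{P}(\lambda;q,m)$ of index $m$. *)

(* Defs.v *)
From Stdlib Require Import Reals Lra Lia.
From Coquelicot Require Import Coquelicot.
Open Scope R_scope.

Fixpoint qpoch (a q : R) (n : nat) : R :=
  match n with
  | O => 1
  | S n' => qpoch a q n' * (1 - a * q ^ n')
  end.

Definition qpoch_inf (a q : R) : R := real (Lim_seq (fun n => qpoch a q n)).

Definition phi32_term (a1 a2 a3 b1 b2 q xi : R) (k : nat) : R :=
  (qpoch a1 q k * qpoch a2 q k * qpoch a3 q k) / (qpoch b1 q k * qpoch b2 q k)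
  * xi ^ k / qpoch q q k.

Definition phi32 (a1 a2 a3 b1 b2 q xi : R) : R :=
  Series (phi32_term a1 a2 a3 b1 b2 q xi).

(* Wall (little q-Laguerre) polynomial P_n(x; a | q) = 2phi1(q^{-n}, 0; aq | q; qx). *)
Definition wall (n : nat) (x a q : R) : R :=
  sum_f_R0 (fun k => qpoch (/ q ^ n) q k / qpoch (a * q) q k * (q * x) ^ k / qpoch q q k) n.

Definition Nqm (q : R) (m : nat) (lam : R) : R :=
  qpoch (q * / q ^ m * (1 - q) * lam) q m / (q ^ m * qpoch_inf (/ q ^ m * (1 - q) * lam) q).

Definition pj (lam q : R) (m j : nat) : R :=
  let mn := Nat.min m j in
  let mx := Nat.max m j in
  let d := (mx - mn)%nat in
  q ^ (mn * (mn - 1)) * (1 - q) ^ d * lam ^ d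
  / (Nqm q m lam * q ^ (m * j) * qpoch q q j * qpoch q q m)
  * (qpoch q q mx / qpoch q q d * wall mn ((1 - q) * lam) (q ^ d) q) ^ 2.

(* Main.v *)
Require Import Defs.
From Stdlib Require Import Reals Lra Lia.
From Coquelicot Require Import Coquelicot.
Open Scope R_scope.


Fixpoint sm (n : nat) (f : nat -> R) : R :=
  match n with O => 0 | S n' => sm n' f + f n' end.
Fixpoint pr (n : nat) (f : nat -> R) : R :=
  match n with O => 1 | S n' => pr n' f * f n' end.

Lemma sm_ext n f g : (forall i, (i < n)%nat -> f i = g i) -> sm n f = sm n g.
Proof. induction n; simpl; intros H; auto. rewrite IHn; [rewrite H|]; auto; intros; apply H; lia. Qed.
Lemma pr_ext n f g : (forall i, (i < n)%nat -> f i = g i) -> pr n f = pr n g.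
Proof. induction n; simpl; intros H; auto. rewrite IHn; [rewrite H|]; auto; intros; apply H; lia. Qed.
Lemma sm_plus n f g : sm n (fun i => f i + g i) = sm n f + sm n g.
Proof. induction n; simpl; [ring|rewrite IHn; ring]. Qed.
Lemma sm_scal n c f : sm n (fun i => c * f i) = c * sm n f.
Proof. induction n; simpl; [ring|rewrite IHn; ring]. Qed.
Lemma sm_zero n f : (forall i, (i < n)%nat -> f i = 0) -> sm n f = 0.
Proof. induction n; simpl; intros H; auto. rewrite IHn, H; auto; try lra; intros; apply H; lia. Qed.
Lemma pr_mul n f g : pr n (fun i => f i * g i) = pr n f * pr n g.
Proof. induction n; simpl; [ring|rewrite IHn; ring]. Qed.
Lemma pr_const n c : pr n (fun _ => c) = c ^ n.
Proof. induction n; simpl; [ring|rewrite IHn; ring]. Qed.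
Lemma sm_add a b f : sm (a + b) f = sm a f + sm b (fun i => f (a + i)%nat).
Proof. induction b; simpl. rewrite Nat.add_0_r; ring. rewrite Nat.add_succ_r; simpl; rewrite IHb; ring. Qed.
Lemma pr_add a b f : pr (a + b) f = pr a f * pr b (fun i => f (a + i)%nat).
Proof. induction b; simpl. rewrite Nat.add_0_r; ring. rewrite Nat.add_succ_r; simpl; rewrite IHb; ring. Qed.
Lemma sm_front n f : sm (S n) f = f O + sm n (fun i => f (S i)).
Proof. replace (S n) with (1 + n)%nat by lia. rewrite sm_add. simpl. ring. Qed.
Lemma pr_front n f : pr (S n) f = f O * pr n (fun i => f (S i)).
Proof. replace (S n) with (1 + n)%nat by lia. rewrite pr_add. simpl. ring. Qed.
Lemma sm_rev n f : sm n f = sm n (fun i => f (n - 1 - i)%nat).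
Proof. induction n; auto. rewrite (sm_front n (fun i => f (S n - 1 - i)%nat)). change (sm (S n) f) with (sm n f + f n). rewrite IHn.
 replace (S n - 1 - 0)%nat with n by lia. rewrite Rplus_comm. f_equal. apply sm_ext; intros; f_equal; lia. Qed.
Lemma pr_rev n f : pr n f = pr n (fun i => f (n - 1 - i)%nat).
Proof. induction n; auto. rewrite (pr_front n (fun i => f (S n - 1 - i)%nat)). change (pr (S n) f) with (pr n f * f n). rewrite IHn.
 replace (S n - 1 - 0)%nat with n by lia. rewrite Rmult_comm. f_equal. apply pr_ext; intros; f_equal; lia. Qed.
Lemma sm_tail n n' f : (n <= n')%nat -> (forall i, (n <= i < n')%nat -> f i = 0) -> sm n' f = sm n f.
Proof. intros H H0. replace n' with (n + (n' - n))%nat by lia. rewrite sm_add. rewrite (sm_zero (n'-n)). ring.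
 intros; apply H0; lia. Qed.
Lemma sm_swap n m g : sm n (fun i => sm m (fun j => g i j)) = sm m (fun j => sm n (fun i => g i j)).
Proof. induction n; simpl. rewrite sm_zero; auto. rewrite IHn, <- sm_plus. auto. Qed.
Lemma sm_tri m g : sm (S m) (fun k => sm (S k) (fun j => g j k)) =
  sm (S m) (fun j => sm (S m - j) (fun i => g j (j + i)%nat)).
Proof.
  transitivity (sm (S m) (fun k => sm (S m) (fun j => if (j <=? k)%nat then g j k else 0))).
  { apply sm_ext; intros k Hk. symmetry. rewrite (sm_tail (S k)); try lia.
    apply sm_ext; intros j Hj. destruct (Nat.leb_spec j k); auto; lia.
    intros j Hj. destruct (Nat.leb_spec j k); auto; lia. }
  rewrite sm_swap. apply sm_ext; intros j Hj.
  replace (S m) with (j + (S m - j))%nat at 1 by lia. rewrite sm_add.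
  rewrite sm_zero. rewrite Rplus_0_l. apply sm_ext; intros i Hi.
  destruct (Nat.leb_spec j (j+i)); auto; lia.
  intros i Hi. destruct (Nat.leb_spec j i); auto; lia.
Qed.
Lemma sum_f_R0_sm f n : sum_f_R0 f n = sm (S n) f.
Proof. induction n; simpl; auto. ring. rewrite IHn. simpl. auto. Qed.
Lemma sum_n_sm f n : sum_n f n = sm (S n) f.
Proof. induction n. rewrite sum_O. simpl. symmetry; apply Rplus_0_l. rewrite sum_Sn, IHn. simpl. reflexivity. Qed.

Definition qtri (q : R) (n : nat) := pr n (fun i => q ^ i).
Definition qbin (q : R) (N i : nat) : R :=
  if (i <=? N)%nat then qpoch q q N / (qpoch q q i * qpoch q q (N - i)) else 0.
Definition Qp (q : R) (l : nat) (w : R) := pr l (fun i => w - q ^ i).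

Lemma qp_pr a q n : qpoch a q n = pr n (fun i => 1 - a * q ^ i).
Proof. induction n; simpl; auto. rewrite IHn; auto. Qed.
Lemma qp_add a q n k : qpoch a q (n + k) = qpoch a q n * qpoch (a * q ^ n) q k.
Proof. rewrite !qp_pr, pr_add. f_equal. apply pr_ext; intros. rewrite pow_add; ring. Qed.
Lemma qp_front a q n : qpoch a q (S n) = (1 - a) * qpoch (a * q) q n.
Proof. rewrite !qp_pr, pr_front. simpl. rewrite Rmult_1_r. f_equal. apply pr_ext; intros. simpl; ring. Qed.
Lemma qp_S a q n : qpoch a q (S n) = qpoch a q n * (1 - a * q ^ n).
Proof. reflexivity. Qed.
Lemma qp0 q n : qpoch 0 q n = 1.
Proof. induction n; simpl; auto. rewrite IHn; ring. Qed.
Lemma qp_zero a q n i : (i < n)%nat -> a * q ^ i = 1 -> qpoch a q n = 0.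
Proof. intros H H1. replace n with (S i + (n - S i))%nat by lia. rewrite qp_add. simpl.
  rewrite H1. ring. Qed.
Lemma pow_lt1 q n : 0 < q < 1 -> 0 < q ^ n <= 1.
Proof. intros Hq. induction n; simpl; split; try lra. apply Rmult_lt_0_compat; lra. nra. Qed.
Lemma qqp_pos q n : 0 < q < 1 -> 0 < qpoch q q n.
Proof. intros Hq. induction n; simpl. lra. apply Rmult_lt_0_compat; auto.
  pose proof (pow_lt1 q n Hq). nra. Qed.
Lemma qqp_neq q n : 0 < q < 1 -> qpoch q q n <> 0.
Proof. intros Hq; pose proof (qqp_pos q n Hq); lra. Qed.

Lemma omq_neq q n : 0 < q < 1 -> 1 - q * q ^ n <> 0.
Proof. intros Hq; pose proof (pow_lt1 q n Hq); nra. Qed.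

Lemma qbin_nn q N : 0 < q < 1 -> qbin q N N = 1.
Proof. intros Hq; unfold qbin. rewrite Nat.leb_refl, Nat.sub_diag. simpl. field. apply qqp_neq; auto. Qed.
Lemma qbin_n0 q N : 0 < q < 1 -> qbin q N 0 = 1.
Proof. intros Hq; unfold qbin. simpl. rewrite Nat.sub_0_r. field. apply qqp_neq; auto. Qed.
Lemma qbin_big q N i : (N < i)%nat -> qbin q N i = 0.
Proof. intros H; unfold qbin. destruct (Nat.leb_spec i N); auto; lia. Qed.

Lemma CV q A B N : 0 < q < 1 ->
  qpoch (A * B) q N = sm (S N) (fun i => qbin q N i * B ^ i * qpoch A q i * qpoch B q (N - i)).
Proof.
  intros Hq. induction N.
  { simpl. rewrite qbin_nn; auto. ring. }
  set (T := fun i => qbin q N i * B ^ i * qpoch A q i * qpoch B q (N - i)).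
  set (X := fun i => T i * (1 - B * q ^ (N - i))).
  set (Z := fun i => T i * (q ^ (N - i) * B * (1 - A * q ^ i))).
  rewrite qp_S, IHN. fold T.
  transitivity (sm (S N) X + sm (S N) Z).
  { rewrite <- sm_plus, Rmult_comm, <- sm_scal. apply sm_ext; intros i Hi.
    unfold X, Z. replace (q ^ N) with (q ^ (N - i) * q ^ i). ring.
    rewrite <- pow_add. f_equal. lia. }
  rewrite sm_front. change (sm (S N) Z) with (sm N Z + Z N).
  rewrite (sm_front (S N)). change (sm (S N) (fun i => qbin q (S N) (S i) * B ^ S i * qpoch A q (S i) * qpoch B q (S N - S i)))
    with (sm N (fun i => qbin q (S N) (S i) * B ^ S i * qpoch A q (S i) * qpoch B q (S N - S i))
      + qbin q (S N) (S N) * B ^ S N * qpoch A q (S N) * qpoch B q (S N - S N)).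
  assert (E0 : X O = qbin q (S N) 0 * B ^ 0 * qpoch A q 0 * qpoch B q (S N - 0)).
  { unfold X, T. rewrite !qbin_n0; auto. rewrite !Nat.sub_0_r. simpl. ring. }
  assert (EN : Z N = qbin q (S N) (S N) * B ^ S N * qpoch A q (S N) * qpoch B q (S N - S N)).
  { unfold Z, T. rewrite !qbin_nn; auto. rewrite !Nat.sub_diag. simpl. ring. }
  rewrite E0, <- EN.
  assert (EM : sm N (fun i => X (S i)) + sm N Z =
     sm N (fun i => qbin q (S N) (S i) * B ^ S i * qpoch A q (S i) * qpoch B q (S N - S i))).
  { rewrite <- sm_plus. apply sm_ext; intros i Hi. unfold X, Z, T, qbin.
    destruct (Nat.leb_spec (S i) N); try lia. destruct (Nat.leb_spec i N); try lia.
    destruct (Nat.leb_spec (S i) (S N)); try lia.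
    replace (S N - S i)%nat with (S (N - S i)) by lia.
    replace (N - i)%nat with (S (N - S i)) by lia.
    set (k := (N - S i)%nat).
    replace N with (i + S k)%nat by lia.
    rewrite !qp_S. rewrite !pow_add. simpl.
    assert (G1 := qqp_neq q i Hq). assert (G2 := qqp_neq q k Hq).
    assert (G3 := qqp_neq q (i + S k) Hq). assert (H4 := qqp_neq q (S i) Hq).
    assert (H5 := qqp_neq q (S k) Hq). rewrite qp_S in H4, H5.
    assert (K1 := omq_neq q i Hq). assert (K2 := omq_neq q k Hq).
    field. auto. }
  rewrite <- EM. ring.
Qed.

Lemma m1sq r : (-1) ^ r * (-1) ^ r = 1.
Proof. induction r; simpl; [ring|]. replace (-1 * (-1) ^ r * (-1 * (-1) ^ r)) with ((-1) ^ r * (-1) ^ r) by ring. auto. Qed.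

Lemma qbin_sym q N i : (i <= N)%nat -> qbin q N i = qbin q N (N - i).
Proof. intros H. unfold qbin. destruct (Nat.leb_spec i N); try lia. destruct (Nat.leb_spec (N - i) N); try lia.
  replace (N - (N - i))%nat with i by lia. f_equal. ring. Qed.

Lemma CV2 q A B N : 0 < q < 1 ->
  qpoch (A * B) q N = sm (S N) (fun i => qbin q N i * A ^ (N - i) * qpoch A q i * qpoch B q (N - i)).
Proof. intros Hq. rewrite Rmult_comm, CV; auto. rewrite sm_rev. apply sm_ext; intros i Hi.
  replace (S N - 1 - i)%nat with (N - i)%nat by lia. replace (N - (N - i))%nat with i by lia.
  rewrite <- qbin_sym by lia. ring. Qed.

Lemma CV0 q B N : 0 < q < 1 -> sm (S N) (fun i => qbin q N i * B ^ i * qpoch B q (N - i)) = 1.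
Proof. intros Hq. rewrite <- (qp0 q N). replace 0 with (0 * B) by ring. rewrite CV; auto.
  apply sm_ext; intros. rewrite qp0. ring. Qed.

Lemma CV0' q A N : 0 < q < 1 -> sm (S N) (fun i => qbin q N i * A ^ (N - i) * qpoch A q i) = 1.
Proof. intros Hq. rewrite <- (qp0 q N). replace 0 with (A * 0) by ring. rewrite CV2; auto.
  apply sm_ext; intros. rewrite qp0. ring. Qed.

Lemma qbin_mul q m k j : 0 < q < 1 -> (j <= k <= m)%nat ->
  qbin q m k * qbin q k j = qbin q m j * qbin q (m - j) (k - j).
Proof. intros Hq H. unfold qbin.
  destruct (Nat.leb_spec k m); try lia. destruct (Nat.leb_spec j k); try lia.
  destruct (Nat.leb_spec j m); try lia. destruct (Nat.leb_spec (k - j) (m - j)); try lia.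
  replace (m - j - (k - j))%nat with (m - k)%nat by lia.
  assert (G1 := qqp_neq q m Hq). assert (G2 := qqp_neq q k Hq). assert (G3 := qqp_neq q j Hq).
  assert (G4 := qqp_neq q (m-k) Hq). assert (G5 := qqp_neq q (k-j) Hq). assert (G6 := qqp_neq q (m-j) Hq).
  field. auto. Qed.

Lemma T1 q a b : qtri q (a + b) = qtri q a * qtri q b * q ^ (a * b).
Proof. unfold qtri. rewrite pr_add. rewrite (pr_ext b _ (fun i => q ^ a * q ^ i)).
  rewrite pr_mul, pr_const, pow_mult. change (pr b (fun i => q ^ i)) with (pr b (pow q)). change (pr a (fun i => q ^ i)) with (pr a (pow q)). ring. intros; apply pow_add. Qed.
Lemma T2 q k : qtri q k * qtri q k * q ^ k = q ^ (k * k).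
Proof. induction k. unfold qtri; simpl; ring. unfold qtri in *; simpl pr.
  replace (S k * S k)%nat with (k * k + (k + k + 1))%nat by lia. rewrite !pow_add, <- IHk. simpl. ring. Qed.
Lemma T3 q n : q ^ (n * (n - 1)) = qtri q n * qtri q n.
Proof. induction n. unfold qtri; simpl; ring. replace (S n * (S n - 1))%nat with (n * (n - 1) + (n + n))%nat.
  rewrite pow_add, IHn. unfold qtri; simpl pr. rewrite pow_add. ring.
  destruct n; simpl; lia. Qed.

Lemma Qp_zero q l j : (j < l)%nat -> Qp q l (q ^ j) = 0.
Proof. intros H. unfold Qp. replace l with (S j + (l - S j))%nat by lia. rewrite pr_add. simpl. ring. Qed.

Lemma L3 q l j : 0 < q < 1 -> (l <= j)%nat ->
  Qp q l (q ^ j) * qpoch q q (j - l) = (-1) ^ l * qtri q l * qpoch q q j.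
Proof. intros Hq. induction l; intros H.
  { unfold Qp, qtri; simpl. rewrite Nat.sub_0_r; ring. }
  assert (E : (j - l = S (j - S l))%nat) by lia.
  apply (Rmult_eq_reg_r (1 - q * q ^ (j - S l))). 2: apply omq_neq; auto.
  unfold Qp, qtri in *; simpl pr.
  replace (pr l (fun i => q ^ j - q ^ i) * (q ^ j - q ^ l) * qpoch q q (j - S l) * (1 - q * q ^ (j - S l)))
    with (pr l (fun i => q ^ j - q ^ i) * qpoch q q (j - l) * (q ^ j - q ^ l)) by (rewrite E; simpl; ring).
  rewrite IHl by lia.
  assert (Hj : q ^ j = q ^ l * q * q ^ (j - S l)).
  { replace j with (l + S (j - S l))%nat at 1 by lia. rewrite pow_add. simpl. ring. }
  rewrite Hj. simpl. ring. Qed.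

Lemma L2 q n k : 0 < q < 1 -> (k <= n)%nat ->
  qpoch (/ q ^ n) q k * qpoch q q (n - k) = (-1) ^ k * qtri q k * (/ q ^ n) ^ k * qpoch q q n.
Proof. intros Hq. induction k; intros H.
  { unfold qtri; simpl. rewrite Nat.sub_0_r; ring. }
  assert (E : (n - k = S (n - S k))%nat) by lia.
  apply (Rmult_eq_reg_r (1 - q * q ^ (n - S k))). 2: apply omq_neq; auto.
  unfold qtri in *; simpl pr. rewrite qp_S.
  replace (qpoch (/ q ^ n) q k * (1 - / q ^ n * q ^ k) * qpoch q q (n - S k) * (1 - q * q ^ (n - S k)))
    with (qpoch (/ q ^ n) q k * qpoch q q (n - k) * (1 - / q ^ n * q ^ k)) by (rewrite E; simpl; ring).
  rewrite IHk by lia.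
  assert (Hn : q ^ n = q ^ k * q * q ^ (n - S k)).
  { replace n with (k + S (n - S k))%nat at 1 by lia. rewrite pow_add. simpl. ring. }
  assert (q ^ k <> 0) by (apply pow_nonzero; lra).
  assert (q ^ (n - S k) <> 0) by (apply pow_nonzero; lra).
  rewrite Hn. simpl. field. repeat split; auto; lra. Qed.

Definition Mf q a m j := sm (S m) (fun l => qbin q m l * a ^ l * Qp q l (q ^ j)).
Definition Ef q a m j := sm (S m) (fun k => qbin q m k * qpoch a q (m - k) * a ^ k * (q ^ k) ^ j).

Lemma Qp_qp q l w : w <> 0 -> Qp q l w = w ^ l * qpoch (/ w) q l.
Proof. intros Hw. unfold Qp. rewrite qp_pr, <- pr_const, <- pr_mul. apply pr_ext; intros. field; auto. Qed.

Lemma qNewton q k w : 0 < q < 1 -> w <> 0 -> w ^ k = sm (S k) (fun l => qbin q k l * Qp q l w).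
Proof. intros Hq Hw. rewrite <- (Rmult_1_r (w ^ k)). rewrite <- (CV0' q (/ w) k Hq).
  rewrite <- sm_scal. apply sm_ext; intros i Hi. rewrite Qp_qp by auto.
  replace (w ^ k) with (w ^ i * w ^ (k - i)). rewrite pow_inv. field. apply pow_nonzero; auto.
  rewrite <- pow_add. f_equal. lia. Qed.

Lemma EM q a m j : 0 < q < 1 -> Ef q a m j = Mf q a m j.
Proof. intros Hq. unfold Ef, Mf.
  assert (Hw : q ^ j <> 0) by (apply pow_nonzero; lra).
  transitivity (sm (S m) (fun k => sm (S k) (fun l =>
     qbin q m k * qpoch a q (m - k) * a ^ k * (qbin q k l * Qp q l (q ^ j))))).
  { apply sm_ext; intros k Hk. rewrite <- pow_mult, Nat.mul_comm, pow_mult.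
    rewrite (qNewton q k (q ^ j)) by auto. rewrite <- sm_scal. auto. }
  rewrite (sm_tri m (fun l k => qbin q m k * qpoch a q (m - k) * a ^ k * (qbin q k l * Qp q l (q ^ j)))).
  apply sm_ext; intros l Hl.
  transitivity (qbin q m l * a ^ l * Qp q l (q ^ j) *
     sm (S (m - l)) (fun i => qbin q (m - l) i * a ^ i * qpoch a q (m - l - i))).
  { rewrite <- sm_scal. replace (S m - l)%nat with (S (m - l)) by lia. apply sm_ext; intros i Hi.
    replace (m - (l + i))%nat with (m - l - i)%nat by lia.
    assert (H : qbin q m (l + i) * qbin q (l + i) l = qbin q m l * qbin q (m - l) i).
    { rewrite qbin_mul by (auto; lia). replace (l + i - l)%nat with i by lia. auto. }
    rewrite pow_add.
    transitivity ((qbin q m (l + i) * qbin q (l + i) l) * qpoch a q (m - l - i) * a ^ l * a ^ i * Qp q l (q ^ j)).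
    ring. rewrite H. ring. }
  rewrite CV0 by auto. ring. Qed.

Lemma Msym_pt q m j l : 0 < q < 1 -> qbin q m l * Qp q l (q ^ j) = qbin q j l * Qp q l (q ^ m).
Proof. intros Hq. destruct (Nat.leb_spec l m) as [Hm|Hm].
  2: { rewrite (qbin_big q m l), (Qp_zero q l m) by auto. ring. }
  destruct (Nat.leb_spec l j) as [Hj|Hj].
  2: { rewrite (qbin_big q j l), (Qp_zero q l j) by auto. ring. }
  assert (E1 := L3 q l j Hq Hj). assert (E2 := L3 q l m Hq Hm).
  assert (G1 := qqp_neq q (j - l) Hq). assert (G2 := qqp_neq q (m - l) Hq).
  assert (G3 := qqp_neq q l Hq).
  apply (Rmult_eq_reg_r (qpoch q q (j - l) * qpoch q q (m - l))). 2: apply Rmult_integral_contrapositive; auto.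
  replace (qbin q m l * Qp q l (q ^ j) * (qpoch q q (j - l) * qpoch q q (m - l)))
    with (qbin q m l * qpoch q q (m - l) * (Qp q l (q ^ j) * qpoch q q (j - l))) by ring.
  replace (qbin q j l * Qp q l (q ^ m) * (qpoch q q (j - l) * qpoch q q (m - l)))
    with (qbin q j l * qpoch q q (j - l) * (Qp q l (q ^ m) * qpoch q q (m - l))) by ring.
  rewrite E1, E2. unfold qbin. destruct (Nat.leb_spec l m); try lia. destruct (Nat.leb_spec l j); try lia.
  field. auto. Qed.

Lemma Msym q a m j : 0 < q < 1 -> Mf q a m j = Mf q a j m.
Proof. intros Hq. unfold Mf.
  rewrite <- (sm_tail (S m) (S (Nat.max m j))); try lia.
  rewrite <- (sm_tail (S j) (S (Nat.max m j))); try lia.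
  apply sm_ext; intros l Hl. transitivity (a ^ l * (qbin q m l * Qp q l (q ^ j))). ring.
  rewrite Msym_pt by auto. ring.
  intros i Hi. rewrite qbin_big by lia. ring.
  intros i Hi. rewrite qbin_big by lia. ring. Qed.

Lemma qtri_pos q n : 0 < q -> 0 < qtri q n.
Proof. intros Hq. unfold qtri. induction n; simpl. lra. apply Rmult_lt_0_compat; auto. apply pow_lt; auto. Qed.
Lemma m1_neq r : (-1) ^ r <> 0.
Proof. apply pow_nonzero; lra. Qed.

Lemma W1_term q x n d k : 0 < q < 1 -> x <> 0 -> (k <= n)%nat ->
  qpoch q q (n + d) / qpoch q q d *
    (qpoch (/ q ^ n) q k / qpoch (q ^ d * q) q k * (q * x) ^ k / qpoch q q k) =
  (-1) ^ n * x ^ n / qtri q n * (qbin q n (n - k) * (/ x) ^ (n - k) * Qp q (n - k) (q ^ (n + d))).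
Proof.
  intros Hq Hx Hk. set (r := (n - k)%nat).
  assert (F1 : qpoch q q (d + k) = qpoch q q d * qpoch (q ^ d * q) q k).
  { rewrite qp_add. f_equal. f_equal. ring. }
  assert (F2 := L2 q n k Hq Hk). fold r in F2.
  assert (F3 := L3 q r (n + d) Hq ltac:(lia)). replace (n + d - r)%nat with (d + k)%nat in F3 by lia.
  assert (Hqn : (/ q ^ n) ^ k = / (qtri q k * qtri q k * q ^ k * q ^ (r * k))).
  { rewrite pow_inv, <- pow_mult, T2, <- pow_add. f_equal. f_equal. unfold r. nia. }
  assert (Hqt : qtri q n = qtri q r * qtri q k * q ^ (r * k)).
  { rewrite <- T1. f_equal. unfold r; lia. }
  assert (Hxn : x ^ n = x ^ k * x ^ r). { rewrite <- pow_add. f_equal. unfold r; lia. }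
  assert (Hs : (-1) ^ n = (-1) ^ k / (-1) ^ r).
  { replace n with (k + r)%nat by (unfold r; lia). rewrite pow_add.
    transitivity ((-1) ^ k * ((-1) ^ r * (-1) ^ r) / (-1) ^ r). field. apply m1_neq.
    rewrite m1sq. field. apply m1_neq. }
  assert (Hb : qbin q n r = qpoch q q n / (qpoch q q r * qpoch q q k)).
  { unfold qbin. destruct (Nat.leb_spec r n); try lia. replace (n - r)%nat with k by (unfold r; lia). auto. }
  assert (G0 := qqp_neq q d Hq). assert (G1 := qqp_neq q k Hq). assert (G2 := qqp_neq q r Hq).
  assert (G3 := qqp_neq q (d + k) Hq). assert (G4 := qqp_neq q n Hq).
  assert (G5 : qpoch (q ^ d * q) q k <> 0). { intro HH. apply G3. rewrite F1, HH. ring. }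
  assert (Pe : qpoch (/ q ^ n) q k = (-1) ^ k * qtri q k * (/ q ^ n) ^ k * qpoch q q n / qpoch q q r).
  { rewrite <- F2. field. auto. }
  assert (Qe : Qp q r (q ^ (n + d)) = (-1) ^ r * qtri q r * qpoch q q (n + d) / qpoch q q (d + k)).
  { rewrite <- F3. field. auto. }
  assert (Pd : qpoch (q ^ d * q) q k = qpoch q q (d + k) / qpoch q q d).
  { rewrite F1. field. auto. }
  rewrite Pe, Qe, Pd, Hb, Hqn, Hqt, Hxn, Hs, pow_inv, Rpow_mult_distr.
  assert (qtri q k <> 0) by (apply Rgt_not_eq, qtri_pos; lra).
  assert (qtri q r <> 0) by (apply Rgt_not_eq, qtri_pos; lra).
  assert (q ^ k <> 0) by (apply pow_nonzero; lra).
  assert (q ^ (r * k) <> 0) by (apply pow_nonzero; lra).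
  assert (x ^ r <> 0) by (apply pow_nonzero; lra).
  assert (x ^ k <> 0) by (apply pow_nonzero; lra).
  assert (M1 := m1_neq r). assert (M2 := m1_neq k).
  field. repeat split; auto.
Qed.

Lemma W1 q x n d : 0 < q < 1 -> x <> 0 ->
  qpoch q q (n + d) / qpoch q q d * wall n x (q ^ d) q = (-1) ^ n * x ^ n / qtri q n * Mf q (/ x) n (n + d).
Proof.
  intros Hq Hx. unfold wall, Mf. rewrite sum_f_R0_sm, (sm_rev (S n) (fun l => qbin q n l * (/ x) ^ l * Qp q l (q ^ (n + d)))), <- !sm_scal. apply sm_ext; intros k Hk.
  replace (S n - 1 - k)%nat with (n - k)%nat by lia. apply W1_term; auto; lia.
Qed.

Lemma pj_E q m lam j : 0 < q < 1 -> 0 < lam -> Nqm q m lam <> 0 ->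
  pj lam q m j = ((1 - q) * lam) ^ m / (Nqm q m lam * qpoch q q m) * (((1 - q) * lam) / q ^ m) ^ j
     * (Ef q (/ ((1 - q) * lam)) m j) ^ 2 / qpoch q q j.
Proof.
  intros Hq Hl HN. unfold pj. cbv zeta.
  set (x := (1 - q) * lam). assert (Hx : 0 < x) by (unfold x; nra).
  set (mn := Nat.min m j). set (mx := Nat.max m j). set (d := (mx - mn)%nat).
  assert (HW : qpoch q q mx / qpoch q q d * wall mn x (q ^ d) q = (-1) ^ mn * x ^ mn / qtri q mn * Ef q (/ x) m j).
  { replace mx with (mn + d)%nat at 1 by (unfold d, mx, mn; lia). rewrite W1 by (auto; lra). f_equal.
    replace (mn + d)%nat with mx by (unfold d, mx, mn; lia).
    destruct (Nat.le_ge_cases m j) as [H|H].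
    - unfold mn, mx. rewrite Nat.min_l, Nat.max_r by auto. rewrite EM; auto.
    - unfold mn, mx. rewrite Nat.min_r, Nat.max_l by auto. rewrite Msym, EM; auto. }
  rewrite HW, T3.
  assert (Hxp : x ^ d * (x ^ mn * x ^ mn) = x ^ m * x ^ j).
  { rewrite <- !pow_add. f_equal. unfold d, mx, mn. lia. }
  assert (qtri q mn <> 0) by (apply Rgt_not_eq, qtri_pos; lra).
  assert (G1 := qqp_neq q j Hq). assert (G2 := qqp_neq q m Hq).
  assert (q ^ m <> 0) by (apply pow_nonzero; lra).
  assert (q ^ (m * j) <> 0) by (apply pow_nonzero; lra).
  transitivity (((1 - q) ^ d * lam ^ d * (x ^ mn * x ^ mn)) * ((-1) ^ mn * (-1) ^ mn) * (Ef q (/ x) m j) ^ 2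
     / (Nqm q m lam * q ^ (m * j) * qpoch q q j * qpoch q q m)).
  { field. auto. }
  rewrite <- Rpow_mult_distr. fold x. rewrite Hxp, m1sq, pow_mult. unfold Rdiv. rewrite Rpow_mult_distr, pow_inv. field.
  repeat split; auto. apply pow_nonzero; auto.
Qed.

Definition aq q := fun n => / qpoch q q n.
Definition fq q z := PSeries (aq q) z.

Lemma lim_inv1 q : 0 < q < 1 -> is_lim_seq (fun n => / (1 - q * q ^ n)) 1.
Proof. intros Hq.
  assert (H1 : is_lim_seq (fun n => 1 - q * q ^ n) (1 - q * 0)).
  { apply is_lim_seq_minus'. apply is_lim_seq_const. apply is_lim_seq_mult'. apply is_lim_seq_const.
    apply is_lim_seq_geom. rewrite Rabs_pos_eq; lra. }
  replace (1 - q * 0) with 1 in H1 by ring.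
  assert (H2 := is_lim_seq_inv _ _ H1). simpl in H2. replace (/ 1) with 1 in H2 by field.
  apply H2. intro HH; injection HH; lra. Qed.

Lemma radius q : 0 < q < 1 -> CV_radius (aq q) = 1.
Proof. intros Hq. replace 1 with (/ 1) by field. apply CV_radius_finite_DAlembert; try lra.
  - intros n. unfold aq. apply Rinv_neq_0_compat, qqp_neq; auto.
  - eapply is_lim_seq_ext. 2: apply (lim_inv1 q Hq). intros n. unfold aq. simpl.
    assert (G := qqp_pos q n Hq). assert (G2 := omq_neq q n Hq). pose proof (pow_lt1 q n Hq).
    rewrite Rabs_pos_eq. field. split; auto; lra.
    apply Rlt_le. replace (/ (qpoch q q n * (1 - q * q ^ n)) / / qpoch q q n) with (/ (1 - q * q ^ n)) by (field; split; lra).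
    apply Rinv_0_lt_compat. nra. Qed.

Lemma fq_series q z : 0 < q < 1 -> Rabs z < 1 -> is_series (fun n => aq q n * z ^ n) (fq q z).
Proof. intros Hq Hz. apply Series_correct. apply ex_series_Rabs. apply CV_disk_inside.
  rewrite radius; auto. Qed.

Lemma fq_func q z : 0 < q < 1 -> Rabs z < 1 -> fq q (q * z) = (1 - z) * fq q z.
Proof. intros Hq Hz.
  assert (Hqz : Rabs (q * z) < 1). { rewrite Rabs_mult, Rabs_pos_eq by lra. pose proof (Rabs_pos z). nra. }
  assert (S1 := fq_series q z Hq Hz). assert (S2 := fq_series q (q * z) Hq Hqz).
  assert (S3 := is_series_minus _ _ _ _ S1 S2).
  assert (S4 : is_series (fun n => aq q n * z ^ n - aq q n * (q * z) ^ n) (z * fq q z)).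
  { assert (S6 : is_series (fun n => aq q (S n) * z ^ (S n) - aq q (S n) * (q * z) ^ (S n)) (z * fq q z)).
    { eapply is_series_ext; [|apply (is_series_scal_l z _ _ S1)]. intros n.
      unfold scal; simpl. unfold mult; simpl. unfold aq. simpl.
      assert (G := qqp_neq q n Hq). assert (G2 := omq_neq q n Hq). rewrite Rpow_mult_distr. field. auto. }
    apply is_series_decr_1.
    unfold plus, opp; simpl. unfold aq; simpl.
    replace (z * fq q z + - (/ 1 * 1 - / 1 * 1)) with (z * fq q z) by (field).
    exact S6. }
  apply is_series_unique in S3. apply is_series_unique in S4.
  change (Series (fun n => aq q n * z ^ n - aq q n * (q * z) ^ n) = fq q z - fq q (q * z)) in S3.
  assert (fq q z - fq q (q * z) = z * fq q z). { rewrite <- S4, <- S3. reflexivity. }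
  lra. Qed.

Lemma fq_iter q z N : 0 < q < 1 -> Rabs z < 1 -> fq q (q ^ N * z) = qpoch z q N * fq q z.
Proof. intros Hq Hz. induction N. simpl. rewrite Rmult_1_l. ring.
  assert (Hn : Rabs (q ^ N * z) < 1).
  { rewrite Rabs_mult, Rabs_pos_eq. pose proof (pow_lt1 q N Hq). pose proof (Rabs_pos z). nra.
    pose proof (pow_lt1 q N Hq); lra. }
  replace (q ^ S N * z) with (q * (q ^ N * z)) by (simpl; ring).
  rewrite fq_func, IHN by auto. simpl. ring. Qed.

Lemma fq0 q : fq q 0 = 1.
Proof. unfold fq. rewrite PSeries_0. unfold aq; simpl. field. Qed.

Lemma fq_lim q z : 0 < q < 1 -> Rabs z < 1 -> is_lim_seq (fun N => qpoch z q N * fq q z) 1.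
Proof. intros Hq Hz. eapply is_lim_seq_ext. intros N. apply fq_iter; auto.
  rewrite <- (fq0 q). apply is_lim_seq_continuous.
  apply PSeries_continuity. rewrite radius; auto. simpl. rewrite Rabs_R0; lra.
  replace 0 with (0 * z) by ring. apply is_lim_seq_mult'. apply is_lim_seq_geom. rewrite Rabs_pos_eq; lra.
  apply is_lim_seq_const. Qed.

Lemma fq_neq q z : 0 < q < 1 -> Rabs z < 1 -> fq q z <> 0.
Proof. intros Hq Hz H. assert (L := fq_lim q z Hq Hz). rewrite H in L.
  assert (L2 : is_lim_seq (fun N : nat => qpoch z q N * 0) 0).
  { eapply is_lim_seq_ext. 2: apply is_lim_seq_const. intros; simpl; ring. }
  apply is_lim_seq_unique in L. apply is_lim_seq_unique in L2. rewrite L in L2. injection L2. lra. Qed.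

Lemma qinf_fq q z : 0 < q < 1 -> Rabs z < 1 -> qpoch_inf z q = / fq q z.
Proof. intros Hq Hz. unfold qpoch_inf.
  assert (L := fq_lim q z Hq Hz). assert (Hn := fq_neq q z Hq Hz).
  assert (L2 := is_lim_seq_mult' _ _ _ _ L (is_lim_seq_const (/ fq q z))).
  rewrite Rmult_1_l in L2.
  erewrite is_lim_seq_unique. 2: { eapply is_lim_seq_ext. 2: apply L2. intros; simpl. field. auto. }
  reflexivity. Qed.

Definition Uf q t n := pr n (fun r => t - q ^ (S r)).

Lemma U_qp q t n : t <> 0 -> Uf q t n = t ^ n * qpoch (q / t) q n.
Proof. intros Ht. unfold Uf. rewrite qp_pr, <- pr_const, <- pr_mul. apply pr_ext; intros. simpl. field. auto. Qed.

Lemma RevL q z n : 0 < q -> z <> 0 -> qpoch z q n = (-z) ^ n * qtri q n * qpoch (q / (z * q ^ n)) q n.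
Proof. intros Hq Hz. rewrite !qp_pr. unfold qtri.
  rewrite (pr_rev n (fun i => 1 - q / (z * q ^ n) * q ^ i)).
  rewrite <- pr_const, <- !pr_mul. apply pr_ext; intros i Hi.
  assert (Hn : q ^ n = q ^ (n - 1 - i) * q ^ i * q).
  { replace n with (n - 1 - i + i + 1)%nat at 1 by lia. rewrite !pow_add. ring. }
  rewrite Hn.
  assert (q ^ i <> 0) by (apply pow_nonzero; lra). assert (q ^ (n - 1 - i) <> 0) by (apply pow_nonzero; lra).
  field. repeat split; auto; lra. Qed.

Lemma m1_neq' r : (-1) ^ r <> 0.
Proof. apply pow_nonzero; lra. Qed.

Lemma A2a q t c k : 0 < q < 1 -> t <> 0 -> c <> 0 ->
  qpoch (t * c) q k = sm (S k) (fun j => qbin q k j * (-1) ^ j * qtri q j * c ^ j * qpoch (q ^ (S j) * c) q (k - j) * Uf q t j).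
Proof.
  intros Hq Ht Hc.
  assert (Hq0 : q <> 0) by lra.
  rewrite RevL by (auto; lra; apply Rmult_integral_contrapositive; auto).
  replace (q / (t * c * q ^ k)) with ((q / t) * (/ (c * q ^ k))) by (field; repeat split; auto; apply pow_nonzero; auto).
  rewrite CV2 by auto. rewrite <- sm_scal. apply sm_ext; intros j Hj.
  assert (Hjk : (j <= k)%nat) by lia.
  assert (Rv : qpoch (q ^ S j * c) q (k - j) = (- (q ^ S j * c)) ^ (k - j) * qtri q (k - j) * qpoch (/ (c * q ^ k)) q (k - j)).
  { rewrite RevL by (lra || (apply Rmult_integral_contrapositive; split; auto; apply pow_nonzero; auto)).
    f_equal. f_equal.
    assert (Hp : q ^ S j * q ^ (k - j) = q * q ^ k) by (rewrite <- pow_add; replace (S j + (k-j))%nat with (S k) by lia; simpl; ring).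
    replace (q ^ S j * c * q ^ (k - j)) with (c * (q * q ^ k)) by (rewrite <- Hp; ring).
    field. split; auto. apply pow_nonzero; auto. }
  rewrite Rv, U_qp by auto.
  assert (Tk : qtri q k = qtri q j * qtri q (k - j) * q ^ (j * (k - j))).
  { rewrite <- T1. f_equal. lia. }
  rewrite Tk.
  replace (- (t * c)) with ((-1) * t * c) by ring. replace (- (q ^ S j * c)) with ((-1) * q ^ S j * c) by ring.
  rewrite !Rpow_mult_distr.
  replace ((-1) ^ k) with ((-1) ^ j * (-1) ^ (k - j)) by (rewrite <- pow_add; f_equal; lia).
  replace (t ^ k) with (t ^ j * t ^ (k - j)) by (rewrite <- pow_add; f_equal; lia).
  replace (c ^ k) with (c ^ j * c ^ (k - j)) by (rewrite <- pow_add; f_equal; lia).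
  replace ((q / t) ^ (k - j)) with (q ^ (k - j) / t ^ (k - j)) by (unfold Rdiv; rewrite Rpow_mult_distr, pow_inv; auto).
  replace ((q ^ S j) ^ (k - j)) with (q ^ (k - j) * q ^ (j * (k - j))) by
     (rewrite <- pow_mult, <- pow_add; f_equal; simpl; lia).
  assert (qtri q (k - j) <> 0) by (apply Rgt_not_eq, qtri_pos; lra).
  assert (qtri q j <> 0) by (apply Rgt_not_eq, qtri_pos; lra).
  assert (t ^ j <> 0) by (apply pow_nonzero; auto).
  assert (t ^ (k - j) <> 0) by (apply pow_nonzero; auto).
  assert (c ^ (k - j) <> 0) by (apply pow_nonzero; auto).
  assert (q ^ (k - j) <> 0) by (apply pow_nonzero; auto).
  assert (q ^ (j * (k - j)) <> 0) by (apply pow_nonzero; auto).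
  assert (M := m1_neq' (k - j)).
  field. repeat split; auto.
Qed.

Lemma D1 q a m k : 0 < q < 1 -> a <> 0 -> (k <= m)%nat ->
  qpoch a q (m - k) * a ^ k * qpoch (q / (a * q ^ m)) q k = qpoch a q m * (-1) ^ k * qtri q k * q ^ k / (q ^ m) ^ k.
Proof.
  intros Hq Ha Hk.
  assert (Hqm : q ^ m <> 0) by (apply pow_nonzero; lra).
  assert (E1 : qpoch a q m = qpoch a q (m - k) * ((-1) ^ k * a ^ k * (q ^ (m - k)) ^ k * qtri q k * qpoch (q / (a * q ^ m)) q k)).
  { replace m with ((m - k) + k)%nat at 1 by lia. rewrite qp_add. f_equal.
    rewrite RevL by (lra || (apply Rmult_integral_contrapositive; split; auto; apply pow_nonzero; lra)).
    replace (a * q ^ (m - k) * q ^ k) with (a * q ^ m).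
    replace (- (a * q ^ (m - k))) with ((-1) * a * q ^ (m - k)) by ring. rewrite !Rpow_mult_distr. ring.
    rewrite Rmult_assoc, <- pow_add. f_equal. f_equal. lia. }
  rewrite E1.
  transitivity (qpoch a q (m - k) * a ^ k * qpoch (q / (a * q ^ m)) q k *
     (((-1) ^ k * (-1) ^ k) * ((q ^ (m - k)) ^ k * (qtri q k * qtri q k * q ^ k)) / (q ^ m) ^ k)).
  2: { field. apply pow_nonzero; auto. }
  rewrite m1sq, T2, pow_mult, <- Rpow_mult_distr, <- pow_add. replace (m - k + k)%nat with m by lia.
  field. apply pow_nonzero; auto.
Qed.

Lemma Vlem q t m k : 0 < q < 1 -> t <> 0 -> (k <= m)%nat ->
  (-1) ^ m * q ^ m * qtri q m * qpoch (t * q ^ k / q ^ m) q m =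
  (-1) ^ k * qtri q k * q ^ k * (q ^ k) ^ (m - k) * qpoch t q k * Uf q t (m - k).
Proof.
  intros Hq Ht Hk. set (n := (m - k)%nat).
  assert (Hm : m = (n + k)%nat) by (unfold n; lia).
  assert (Hqk : q ^ k <> 0) by (apply pow_nonzero; lra).
  assert (Hqn : q ^ n <> 0) by (apply pow_nonzero; lra).
  assert (E1 : qpoch (t * q ^ k / q ^ m) q m = qpoch (t * q ^ k / q ^ m) q n * qpoch t q k).
  { rewrite Hm at 2. rewrite qp_add. f_equal. f_equal. rewrite Hm, pow_add. field. auto. }
  assert (E2 : qpoch (t * q ^ k / q ^ m) q n = (-1) ^ n * Uf q t n * (q ^ k) ^ n * qtri q n / (q ^ m) ^ n).
  { rewrite RevL by (lra || (rewrite Hm, pow_add; unfold Rdiv; repeat apply Rmult_integral_contrapositive; repeat split; auto;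
       apply Rinv_neq_0_compat; apply Rmult_integral_contrapositive; auto)).
    rewrite U_qp by auto.
    replace (q / (t * q ^ k / q ^ m * q ^ n)) with (q / t) by (rewrite Hm, pow_add; field; auto).
    replace (- (t * q ^ k / q ^ m)) with ((-1) * t * q ^ k * / q ^ m) by (field; rewrite Hm, pow_add; auto).
    rewrite !Rpow_mult_distr, pow_inv. field. apply pow_nonzero; rewrite Hm, pow_add; apply Rmult_integral_contrapositive; auto. }
  rewrite E1, E2.
  assert (Tm : qtri q m = qtri q n * qtri q k * q ^ (n * k)) by (rewrite Hm; apply T1).
  rewrite Tm.
  assert (Hs : (-1) ^ m = (-1) ^ n * (-1) ^ k) by (rewrite Hm; apply pow_add).
  rewrite Hs.
  assert (Hqm : (q ^ m) ^ n = (qtri q n * qtri q n * q ^ n) * (q ^ k) ^ n).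
  { rewrite T2, pow_mult, <- Rpow_mult_distr, <- pow_add, <- Hm. auto. }
  rewrite Hqm. replace (q ^ m) with (q ^ n * q ^ k) by (rewrite Hm, pow_add; auto).
  replace (q ^ (n * k)) with ((q ^ k) ^ n) by (rewrite <- pow_mult; f_equal; lia).
  transitivity ((-1) ^ k * ((-1) ^ n * (-1) ^ n) * qtri q k * q ^ k * (q ^ k) ^ n * qpoch t q k * Uf q t n).
  2: { rewrite m1sq. ring. }
  assert (qtri q n <> 0) by (apply Rgt_not_eq, qtri_pos; lra).
  assert ((q ^ k) ^ n <> 0) by (apply pow_nonzero; auto).
  field. auto.
Qed.

Definition dl q a m k := qbin q m k * qpoch a q (m - k) * a ^ k.

Lemma D1s q a m k : 0 < q < 1 -> a <> 0 -> (k <= m)%nat ->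
  qpoch a q (m - k) * a ^ k * qpoch (q / (a * q ^ m)) q k = qpoch a q m * qtri q k * q ^ k / ((-1) ^ k * (q ^ m) ^ k).
Proof. intros Hq Ha Hk. rewrite D1 by auto.
  assert ((q ^ m) ^ k <> 0) by (apply pow_nonzero, pow_nonzero; lra).
  assert (M := m1_neq' k).
  transitivity (qpoch a q m * qtri q k * q ^ k * ((-1) ^ k * (-1) ^ k) / ((-1) ^ k * (q ^ m) ^ k)).
  field. split; auto. rewrite m1sq, Rmult_1_r. reflexivity. Qed.

Lemma Hpow q m k : (k <= m)%nat -> qtri q k * qtri q k * q ^ k * (q ^ k) ^ (m - k) = (q ^ m) ^ k.
Proof. intros Hk. rewrite T2, pow_mult, <- pow_add, <- !pow_mult. f_equal. nia. Qed.

Lemma CVU q t j N : 0 < q < 1 -> t <> 0 ->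
  sm (S N) (fun i => qbin q N i * q ^ i * qpoch (t * q ^ j) q i * Uf q t (N - i)) = t ^ N * qpoch (q * q ^ j) q N.
Proof. intros Hq Ht.
  replace (q * q ^ j) with ((t * q ^ j) * (q / t)) by (field; auto).
  rewrite CV by auto. rewrite <- sm_scal. apply sm_ext; intros i Hi.
  rewrite U_qp by auto.
  replace (t ^ N) with (t ^ i * t ^ (N - i)) by (rewrite <- pow_add; f_equal; lia).
  unfold Rdiv. rewrite Rpow_mult_distr, pow_inv.
  assert (t ^ i <> 0) by (apply pow_nonzero; auto). field. auto. Qed.

Lemma Gpt q x t m j i : 0 < q < 1 -> 0 < x -> t <> 0 -> (j + i <= m)%nat ->
  qpoch (q * (x / q ^ m)) q j <> 0 ->
  let a := / x in let c := x / q ^ m in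
  dl q a m (j + i) * ((-1) ^ (j + i) * qtri q (j + i) * q ^ (j + i) * (q ^ (j + i)) ^ (m - (j + i)) * qpoch t q (j + i) * Uf q t (m - (j + i))) *
   (qbin q (j + i) j * (-1) ^ j * qtri q j * c ^ j * qpoch (q ^ (S j) * c) q (j + i - j) * Uf q t j)
  = (qbin q m j * qpoch a q m * (-1) ^ j * qtri q j * c ^ j * Uf q t j * q ^ j * qpoch t q j / qpoch (q * c) q j) *
    (qbin q (m - j) i * q ^ i * qpoch (t * q ^ j) q i * Uf q t (m - j - i)).
Proof.
  intros Hq Hx Ht Hm Hqc a c. set (k := (j + i)%nat).
  assert (Ha : a <> 0) by (unfold a; apply Rinv_neq_0_compat; lra).
  assert (Hqm : q ^ m <> 0) by (apply pow_nonzero; lra).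
  assert (Hac : q / (a * q ^ m) = q * c) by (unfold a, c; field; split; auto; lra).
  assert (Dk := D1s q a m k Hq Ha Hm). rewrite Hac in Dk.
  assert (Pk : qpoch (q * c) q k = qpoch (q * c) q j * qpoch (q ^ S j * c) q (k - j)).
  { unfold k. rewrite qp_add. replace (j + i - j)%nat with i by lia. f_equal. f_equal. simpl; ring. }
  assert (Bm : qbin q m k * qbin q k j = qbin q m j * qbin q (m - j) i).
  { rewrite qbin_mul by (auto; unfold k; lia). f_equal. f_equal. unfold k; lia. }
  assert (Tk : qpoch t q k = qpoch t q j * qpoch (t * q ^ j) q i) by (unfold k; apply qp_add).
  assert (Hp := Hpow q m k Hm).
  assert (Hqk : q ^ k = q ^ j * q ^ i) by (unfold k; apply pow_add).
  replace (m - j - i)%nat with (m - k)%nat by (unfold k; lia).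
  fold c in Hqc. fold k.
  unfold dl.
  transitivity ((qbin q m k * qbin q k j) * (qpoch a q (m - k) * a ^ k * qpoch (q * c) q k) *
     ((-1) ^ k * qtri q k * q ^ k * (q ^ k) ^ (m - k) * qpoch t q k * Uf q t (m - k)) *
     ((-1) ^ j * qtri q j * c ^ j * Uf q t j) / qpoch (q * c) q j).
  { rewrite Pk. field. auto. }
  rewrite Bm, Dk, <- Hp, Tk, Hqk.
  assert (q ^ j <> 0) by (apply pow_nonzero; lra).
  assert (q ^ i <> 0) by (apply pow_nonzero; lra).
  assert (qtri q k <> 0) by (apply Rgt_not_eq, qtri_pos; lra).
  assert (M := m1_neq' k).
  field. repeat split; auto. apply pow_nonzero. apply Rmult_integral_contrapositive; auto.
Qed.

Lemma KEY q x t m : 0 < q < 1 -> 0 < x -> t <> 0 ->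
  (forall j, (j <= m)%nat -> qpoch (q * (x / q ^ m)) q j <> 0) ->
  qpoch q q m * sm (S m) (fun j => dl q (/ x) m j * Uf q t j * t ^ (m - j) * qpoch t q j * x ^ j / qpoch q q j)
  = sm (S m) (fun k => dl q (/ x) m k * qpoch (t * (x / q ^ m)) q k *
       ((-1) ^ k * qtri q k * q ^ k * (q ^ k) ^ (m - k) * qpoch t q k * Uf q t (m - k))).
Proof.
  intros Hq Hx Ht Hqc.
  assert (Hqm : q ^ m <> 0) by (apply pow_nonzero; lra).
  assert (Hc : x / q ^ m <> 0) by (unfold Rdiv; apply Rmult_integral_contrapositive; split; [lra| apply Rinv_neq_0_compat; auto]).
  symmetry.
  transitivity (sm (S m) (fun k => sm (S k) (fun j =>
    dl q (/ x) m k * ((-1) ^ k * qtri q k * q ^ k * (q ^ k) ^ (m - k) * qpoch t q k * Uf q t (m - k)) *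
    (qbin q k j * (-1) ^ j * qtri q j * (x / q ^ m) ^ j * qpoch (q ^ (S j) * (x / q ^ m)) q (k - j) * Uf q t j)))).
  { apply sm_ext; intros k Hk. rewrite sm_scal. rewrite A2a by auto. ring. }
  rewrite (sm_tri m (fun j k => dl q (/ x) m k * ((-1) ^ k * qtri q k * q ^ k * (q ^ k) ^ (m - k) * qpoch t q k * Uf q t (m - k)) *
    (qbin q k j * (-1) ^ j * qtri q j * (x / q ^ m) ^ j * qpoch (q ^ (S j) * (x / q ^ m)) q (k - j) * Uf q t j))).
  rewrite <- sm_scal. apply sm_ext; intros j Hj.
  replace (S m - j)%nat with (S (m - j)) by lia.
  rewrite (sm_ext _ _ (fun i => (qbin q m j * qpoch (/ x) q m * (-1) ^ j * qtri q j * (x / q ^ m) ^ j * Uf q t j * q ^ j * qpoch t q j / qpoch (q * (x / q ^ m)) q j) *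
    (qbin q (m - j) i * q ^ i * qpoch (t * q ^ j) q i * Uf q t (m - j - i)))).
  2: { intros i Hi. apply Gpt; auto; try lia. apply Hqc; lia. }
  rewrite sm_scal, CVU by auto.
  assert (Qm : qpoch q q m = qpoch q q j * qpoch (q * q ^ j) q (m - j)).
  { replace m with (j + (m - j))%nat at 1 by lia. apply qp_add. }
  rewrite Qm.
  assert (Ha : / x <> 0) by (apply Rinv_neq_0_compat; lra).
  assert (Dj := D1 q (/ x) m j Hq Ha ltac:(lia)).
  replace (q / (/ x * q ^ m)) with (q * (x / q ^ m)) in Dj by (field; split; auto; lra).
  assert (Hj' := Hqc j ltac:(lia)).
  assert (Dj' : qpoch (/ x) q (m - j) * (/ x) ^ j = qpoch (/ x) q m * (-1) ^ j * qtri q j * q ^ j / ((q ^ m) ^ j * qpoch (q * (x / q ^ m)) q j)).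
  { apply (Rmult_eq_reg_r (qpoch (q * (x / q ^ m)) q j)); auto. rewrite Dj. field. split; auto. apply pow_nonzero; auto. }
  replace (dl q (/ x) m j) with (qbin q m j * (qpoch (/ x) q (m - j) * (/ x) ^ j)) by (unfold dl; ring).
  rewrite Dj'. replace ((x / q ^ m) ^ j) with (x ^ j / (q ^ m) ^ j) by (unfold Rdiv; rewrite Rpow_mult_distr, pow_inv; auto).
  assert (G1 := qqp_neq q j Hq).
  assert ((q ^ m) ^ j <> 0) by (apply pow_nonzero; auto).
  field. repeat split; auto.
Qed.

Lemma am_neq q x m : 0 < q < 1 -> 0 < x -> qpoch (q * (x / q ^ m)) q m <> 0 -> qpoch (/ x) q m <> 0.
Proof. intros Hq Hx H HH.
  assert (Ha : / x <> 0) by (apply Rinv_neq_0_compat; lra).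
  assert (Dm := D1 q (/ x) m m Hq Ha (le_n m)).
  replace (q / (/ x * q ^ m)) with (q * (x / q ^ m)) in Dm by (field; repeat split; try lra; apply pow_nonzero; lra).
  rewrite HH, Nat.sub_diag in Dm. simpl in Dm.
  assert (/ x ^ m <> 0) by (apply Rinv_neq_0_compat, pow_nonzero; lra).
  rewrite pow_inv in Dm. apply H. apply (Rmult_eq_reg_l (1 * / x ^ m)). rewrite Dm. unfold Rdiv. ring.
  rewrite Rmult_1_l; auto. Qed.

Lemma TL q x t m k : 0 < q < 1 -> 0 < x -> t <> 0 -> (k <= m)%nat ->
  qpoch (q * (x / q ^ m)) q k <> 0 -> qpoch (/ x) q m <> 0 ->
  t ^ m * phi32_term (/ q ^ m) (q / t) t (q * (x / q ^ m)) q q (q * x) k =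
  dl q (/ x) m k * Uf q t k * t ^ (m - k) * qpoch t q k * x ^ k / qpoch q q k / qpoch (/ x) q m.
Proof.
  intros Hq Hx Ht Hk Hqc Ham. unfold phi32_term.
  assert (Ha : / x <> 0) by (apply Rinv_neq_0_compat; lra).
  assert (Hqm : q ^ m <> 0) by (apply pow_nonzero; lra).
  assert (Dk := D1 q (/ x) m k Hq Ha Hk).
  replace (q / (/ x * q ^ m)) with (q * (x / q ^ m)) in Dk by (field; split; auto; lra).
  assert (L := L2 q m k Hq Hk).
  assert (G1 := qqp_neq q k Hq). assert (G2 := qqp_neq q (m - k) Hq). assert (G3 := qqp_neq q m Hq).
  assert (Pm : qpoch (/ q ^ m) q k = (-1) ^ k * qtri q k * (/ q ^ m) ^ k * qpoch q q m / qpoch q q (m - k)).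
  { rewrite <- L. field. auto. }
  assert (Dk' : qpoch (/ x) q (m - k) * (/ x) ^ k = qpoch (/ x) q m * (-1) ^ k * qtri q k * q ^ k / ((q ^ m) ^ k * qpoch (q * (x / q ^ m)) q k)).
  { apply (Rmult_eq_reg_r (qpoch (q * (x / q ^ m)) q k)); auto. rewrite Dk. field. split; auto. apply pow_nonzero; auto. }
  replace (dl q (/ x) m k) with (qbin q m k * (qpoch (/ x) q (m - k) * (/ x) ^ k)) by (unfold dl; ring).
  rewrite Dk', Pm, U_qp by auto.
  unfold qbin. destruct (Nat.leb_spec k m); try lia.
  replace (t ^ m) with (t ^ k * t ^ (m - k)) by (rewrite <- pow_add; f_equal; lia).
  rewrite pow_inv, Rpow_mult_distr.
  assert (qtri q k <> 0) by (apply Rgt_not_eq, qtri_pos; lra).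
  assert (t ^ k <> 0) by (apply pow_nonzero; auto).
  assert ((q ^ m) ^ k <> 0) by (apply pow_nonzero; auto).
  field. repeat split; auto.
Qed.

Lemma FinF q x t m : 0 < q < 1 -> 0 < x -> t <> 0 ->
  (forall j, (j <= m)%nat -> qpoch (q * (x / q ^ m)) q j <> 0) ->
  t ^ m * sm (S m) (fun k => phi32_term (/ q ^ m) (q / t) t (q * (x / q ^ m)) q q (q * x) k)
  = x ^ m * q ^ m / (qpoch (q * (x / q ^ m)) q m * qpoch q q m) *
    sm (S m) (fun k => sm (S m) (fun k' => dl q (/ x) m k * dl q (/ x) m k' * qpoch (t * (x / q ^ m)) q (k + k'))).
Proof.
  intros Hq Hx Ht Hqc.
  assert (Hqm : q ^ m <> 0) by (apply pow_nonzero; lra).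
  assert (Hqcm := Hqc m (le_n m)).
  assert (Ham := am_neq q x m Hq Hx Hqcm).
  assert (Ha : / x <> 0) by (apply Rinv_neq_0_compat; lra).
  assert (G3 := qqp_neq q m Hq).
  assert (qtri q m <> 0) by (apply Rgt_not_eq, qtri_pos; lra).
  assert (M := m1_neq' m).
  rewrite <- sm_scal.
  rewrite (sm_ext _ _ (fun k => / qpoch (/ x) q m * (dl q (/ x) m k * Uf q t k * t ^ (m - k) * qpoch t q k * x ^ k / qpoch q q k))).
  2: { intros k Hk. rewrite TL by (auto; try lia; apply Hqc; lia). field. split; auto. apply qqp_neq; auto. }
  rewrite sm_scal.
  rewrite (sm_ext (S m) (fun k => sm (S m) (fun k' => dl q (/ x) m k * dl q (/ x) m k' * qpoch (t * (x / q ^ m)) q (k + k')))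
     (fun k => / ((-1) ^ m * q ^ m * qtri q m) * (dl q (/ x) m k * qpoch (t * (x / q ^ m)) q k *
       ((-1) ^ k * qtri q k * q ^ k * (q ^ k) ^ (m - k) * qpoch t q k * Uf q t (m - k))))).
  2: { intros k Hk.
       transitivity (dl q (/ x) m k * qpoch (t * (x / q ^ m)) q k * qpoch (t * (x / q ^ m) * q ^ k * / x) q m).
       { rewrite (CV q (t * (x / q ^ m) * q ^ k) (/ x) m Hq), <- sm_scal. apply sm_ext; intros i Hi.
         rewrite qp_add. unfold dl. ring. }
       rewrite <- Vlem by (auto; lia).
       replace (t * q ^ k / q ^ m) with ((t * (x / q ^ m) * q ^ k) * / x) by (field; split; lra).
       field. repeat split; auto. }
  rewrite sm_scal, <- KEY by auto.
  assert (Dm := D1 q (/ x) m m Hq Ha (le_n m)).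
  replace (q / (/ x * q ^ m)) with (q * (x / q ^ m)) in Dm by (field; repeat split; try lra; apply pow_nonzero; lra).
  rewrite Nat.sub_diag, pow_inv in Dm. simpl qpoch in Dm.
  assert (Cq : qpoch (q * (x / q ^ m)) q m = qpoch (/ x) q m * (-1) ^ m * qtri q m * q ^ m * x ^ m / (q ^ m) ^ m).
  { apply (Rmult_eq_reg_l (1 * / x ^ m)).
    - rewrite Dm. field. repeat split; try lra; try auto; apply pow_nonzero; lra.
    - apply Rmult_integral_contrapositive; split; [lra| apply Rinv_neq_0_compat, pow_nonzero; lra]. }
  rewrite Cq.
  assert (Hmm : (q ^ m) ^ m = qtri q m * qtri q m * q ^ m) by (rewrite T2, pow_mult; auto).
  rewrite Hmm.
  assert (x ^ m <> 0) by (apply pow_nonzero; lra).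
  transitivity (/ qpoch (/ x) q m * (qpoch q q m * sm (S m)
      (fun j => dl q (/ x) m j * Uf q t j * t ^ (m - j) * qpoch t q j * x ^ j / qpoch q q j)) / ((-1) ^ m * (-1) ^ m) / qpoch q q m).
  { rewrite m1sq. field. auto. }
  field. repeat split; auto.
Qed.

Lemma series_fin a m : (forall k, (m < k)%nat -> a k = 0) -> is_series a (sm (S m) a).
Proof. intros Ha.
  assert (L : is_lim_seq (sum_n a) (sm (S m) a)).
  { apply is_lim_seq_ext_loc with (fun _ => sm (S m) a). exists m; intros n Hn.
    rewrite sum_n_sm. symmetry. apply sm_tail. lia. intros i Hi. apply Ha. lia.
    apply is_lim_seq_const. }
  exact L. Qed.

Lemma is_series_sm n (g : nat -> nat -> R) (l : nat -> R) :
  (forall k, (k < n)%nat -> is_series (g k) (l k)) ->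
  is_series (fun j => sm n (fun k => g k j)) (sm n l).
Proof. induction n; intros H.
  - simpl. assert (S0 := series_fin (fun _ => 0) 0 (fun _ _ => eq_refl)).
    simpl in S0. replace (0 + 0) with 0 in S0 by ring. exact S0.
  - simpl. assert (S1 := is_series_plus _ _ _ _ (IHn (fun k Hk => H k ltac:(lia))) (H n ltac:(lia))).
    exact S1. Qed.

Lemma sm_prod n n' f g : sm n f * sm n' g = sm n (fun i => sm n' (fun j => f i * g j)).
Proof. induction n; simpl. ring. rewrite <- IHn, sm_scal. ring. Qed.

Lemma is_series_scalR c a l : is_series a l -> is_series (fun n => c * a n) (c * l).
Proof. intros H. exact (is_series_scal_l c a l H). Qed.

Lemma qc_pos q c j : 0 < q < 1 -> 0 < c < 1 -> 0 < qpoch (q * c) q j.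
Proof. intros Hq Hc. induction j; simpl. lra. apply Rmult_lt_0_compat; auto.
  pose proof (pow_lt1 q j Hq). assert (q * c < 1) by nra. nra. Qed.

Theorem proposition4p1 (q : R) (m : nat) (lam t : R) :
  0 < q < 1 ->
  0 < lam < q ^ m / (1 - q) ->
  Rabs t <= 1 -> t <> 0 ->
  (forall k : nat, (m < k)%nat ->
     phi32_term (/ q ^ m) (q / t) t (q * / q ^ m * (1 - q) * lam) q q
                (q * lam * (1 - q)) k = 0) /\
  is_series (fun j : nat => t ^ j * pj lam q m j)
    (t ^ m * qpoch_inf (/ q ^ m * (1 - q) * lam) q
       / qpoch_inf (/ q ^ m * t * lam * (1 - q)) q
     * phi32 (/ q ^ m) (q / t) t (q * / q ^ m * (1 - q) * lam) q q
             (q * lam * (1 - q))).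
Proof.
  intros Hq Hl Ht Ht0.
  assert (Hqm : q ^ m <> 0) by (apply pow_nonzero; lra).
  assert (Hqm0 : 0 < q ^ m) by (apply pow_lt; lra).
  assert (P0 : forall k, (m < k)%nat -> phi32_term (/ q ^ m) (q / t) t (q * / q ^ m * (1 - q) * lam) q q (q * lam * (1 - q)) k = 0).
  { intros k Hk. unfold phi32_term. rewrite (qp_zero (/ q ^ m) q k m Hk) by (field; auto). unfold Rdiv. ring. }
  split; [exact P0|].
  set (x := (1 - q) * lam).
  assert (Hx : 0 < x) by (unfold x; nra).
  assert (Hxm : x < q ^ m).
  { unfold x. destruct Hl as [_ Hl]. apply (Rmult_lt_compat_l (1 - q)) in Hl; [|lra].
    replace ((1 - q) * (q ^ m / (1 - q))) with (q ^ m) in Hl by (field; lra). lra. }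
  set (c := x / q ^ m).
  assert (Hc : 0 < c < 1).
  { unfold c. split. apply Rdiv_lt_0_compat; auto. apply (Rmult_lt_reg_r (q ^ m)); auto.
    unfold Rdiv. rewrite Rmult_assoc, Rinv_l; lra. }
  set (y := t * c).
  assert (Hy : forall s, Rabs (q ^ s * y) < 1).
  { intros s. unfold y. rewrite !Rabs_mult, (Rabs_pos_eq (q ^ s)), (Rabs_pos_eq c) by (try apply pow_le; lra).
    pose proof (pow_lt1 q s Hq). pose proof (Rabs_pos t).
    assert (Rabs t * c < 1) by nra. assert (0 <= Rabs t * c) by nra. nra. }
  assert (Hy0 : Rabs y < 1) by (specialize (Hy O); simpl in Hy; rewrite Rmult_1_l in Hy; auto).
  assert (Hcabs : Rabs c < 1) by (rewrite Rabs_pos_eq; lra).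
  replace (/ q ^ m * (1 - q) * lam) with c by (unfold c, x; field; auto).
  replace (/ q ^ m * t * lam * (1 - q)) with y by (unfold y, c, x; field; auto).
  replace (q * / q ^ m * (1 - q) * lam) with (q * c) by (unfold c, x; field; auto).
  replace (q * / q ^ m * (1 - q) * lam) with (q * c) in P0 by (unfold c, x; field; auto).
  replace (q * lam * (1 - q)) with (q * x) by (unfold x; ring).
  replace (q * lam * (1 - q)) with (q * x) in P0 by (unfold x; ring).
  assert (Hqc : forall j, 0 < qpoch (q * c) q j) by (intros; apply qc_pos; auto).
  assert (Hqi : qpoch_inf c q = / fq q c) by (apply qinf_fq; auto).
  assert (Hfc := fq_neq q c Hq Hcabs).
  assert (Hqiy : qpoch_inf y q = / fq q y) by (apply qinf_fq; auto).
  assert (Hfy := fq_neq q y Hq Hy0).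
  assert (HN : Nqm q m lam = qpoch (q * c) q m / (q ^ m * qpoch_inf c q)).
  { unfold Nqm. f_equal. f_equal. unfold c, x; field; auto. f_equal. f_equal. unfold c, x; field; auto. }
  assert (HN0 : Nqm q m lam <> 0).
  { rewrite HN, Hqi. specialize (Hqc m). unfold Rdiv. apply Rmult_integral_contrapositive; split; [lra|].
    apply Rinv_neq_0_compat, Rmult_integral_contrapositive; split; auto. apply Rinv_neq_0_compat; auto. }
  set (K0 := x ^ m / (Nqm q m lam * qpoch q q m)).
  set (g := fun k k' j => dl q (/ x) m k * dl q (/ x) m k' * (aq q j * (q ^ (k + k') * y) ^ j)).
  assert (Hpt : forall j, t ^ j * pj lam q m j = K0 * sm (S m) (fun k => sm (S m) (fun k' => g k k' j))).
  { intros j. rewrite pj_E by (auto; lra). fold x. fold c. unfold K0, g.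
    assert (HE : Ef q (/ x) m j = sm (S m) (fun k => dl q (/ x) m k * (q ^ k) ^ j)).
    { unfold Ef, dl. apply sm_ext; intros; ring. }
    rewrite HE. unfold aq.
    transitivity (K0 * ((t ^ j * c ^ j / qpoch q q j) * (sm (S m) (fun k => dl q (/ x) m k * (q ^ k) ^ j) * sm (S m) (fun k => dl q (/ x) m k * (q ^ k) ^ j)))).
    { unfold K0. field. repeat split; auto; apply qqp_neq; auto. }
    unfold K0. f_equal. rewrite sm_prod, <- sm_scal. apply sm_ext; intros k Hk.
    rewrite <- sm_scal. apply sm_ext; intros k' Hk'.
    unfold y. rewrite !Rpow_mult_distr, pow_add, Rpow_mult_distr. field. apply qqp_neq; auto. }
  assert (Hser : is_series (fun j => K0 * sm (S m) (fun k => sm (S m) (fun k' => g k k' j)))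
      (K0 * sm (S m) (fun k => sm (S m) (fun k' => dl q (/ x) m k * dl q (/ x) m k' * fq q (q ^ (k + k') * y))))).
  { apply is_series_scalR. apply is_series_sm; intros k Hk. apply is_series_sm; intros k' Hk'.
    unfold g. apply is_series_scalR. apply fq_series; auto. }
  assert (Hphi : phi32 (/ q ^ m) (q / t) t (q * c) q q (q * x) = sm (S m) (fun k => phi32_term (/ q ^ m) (q / t) t (q * c) q q (q * x) k)).
  { unfold phi32. apply is_series_unique. apply series_fin. auto. }
  assert (FF := FinF q x t m Hq Hx Ht0 ltac:(intros; apply Rgt_not_eq, qc_pos; auto)).
  fold c in FF. fold y in FF.
  eapply is_series_ext. { intros j. symmetry. apply Hpt. }
  replace (t ^ m * qpoch_inf c q / qpoch_inf y q * phi32 (/ q ^ m) (q / t) t (q * c) q q (q * x))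
    with (K0 * sm (S m) (fun k => sm (S m) (fun k' => dl q (/ x) m k * dl q (/ x) m k' * fq q (q ^ (k + k') * y)))).
  exact Hser.
  rewrite Hphi.
  rewrite (sm_ext _ _ (fun k => fq q y * sm (S m) (fun k' => dl q (/ x) m k * dl q (/ x) m k' * qpoch y q (k + k')))).
  2: { intros k Hk. rewrite <- sm_scal. apply sm_ext; intros k' Hk'. rewrite fq_iter by auto. ring. }
  rewrite sm_scal.
  transitivity (qpoch_inf c q * fq q y * (t ^ m * sm (S m) (fun k => phi32_term (/ q ^ m) (q / t) t (q * c) q q (q * x) k))).
  2: { rewrite Hqiy. field. auto. }
  rewrite FF. unfold K0. rewrite HN, Hqi.
  assert (G1 := qqp_neq q m Hq). assert (G2 : qpoch (q * c) q m <> 0) by (apply Rgt_not_eq; apply Hqc).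
  field. repeat split; auto.
Qed.
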